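(* Let $\omega$ be a rectilinearly-convex obstacle. Then there exists a minimum skeleton $S^*$ for $\omega$ such that each edge of $S^*$ is a maximum length visibility edge of $\omega$.
   Context: An obstacle $\omega$ is a simple polygon in $\mathbb{R}^2$ (a closed, bounded polygonal region without holes whose boundary does not intersect itself), assumed in general position (no three of its vertices are collinear). $\omega$ is rectilinear if each boundary edge is horizontal or vertical, and a rectilinear obstacle is rectilinearly-convex if any two points of $\omega$ can be joined by a shortest rectilinear path (made of horizontal and vertical segments, of minimum $\ell_1$ length) contained in $\omega$. A corner point of a rectilinear path is a point where a horizontal and a vertical segment of the path meet. A set $S$ of closed line segments is inside $\omega$ if the union of its elements is contained in $\omega$. Such an $S$ is a skeleton for $\omega$ if for every pair of points $p,q$ not in the interior of $\omega$ such that every shortest rectilinear path between $p$ and $q$ with at most one corner point meets the interior of $\omega$, each such path intersects some element of $S$. A minimum skeleton is a skeleton with the smallest possible number of segments. A visibility edge is a line segment contained in $\omega$; it is a maximum length visibility edge if it cannot be extended at either end while remaining contained in $\omega$ (i.e. it extends as far as possible in both directions to the boundary of $\omega$). *)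

(* Defs.v *)
From Stdlib Require Import Reals List Arith.
Open Scope R_scope.

Definition pt := (R * R)%type.

Definition seg (a b : pt) (p : pt) : Prop :=
  exists t, 0 <= t <= 1 /\
    fst p = fst a + t * (fst b - fst a) /\
    snd p = snd a + t * (snd b - snd a).

(* basic topology of the plane (max-norm balls; same topology as Euclidean) *)
Definition ball_in (p : pt) (e : R) (q : pt) : Prop :=
  Rabs (fst q - fst p) < e /\ Rabs (snd q - snd p) < e.
Definition interior (A : pt -> Prop) (p : pt) : Prop :=
  exists e, 0 < e /\ forall q, ball_in p e q -> A q.
Definition boundary (A : pt -> Prop) (p : pt) : Prop :=
  forall e, 0 < e ->
    (exists q, ball_in p e q /\ A q) /\ (exists q, ball_in p e q /\ ~ A q).
Definition is_closed (A : pt -> Prop) : Prop :=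
  forall p, (forall e, 0 < e -> exists q, ball_in p e q /\ A q) -> A p.
Definition is_bounded (A : pt -> Prop) : Prop :=
  exists M, forall p, A p -> Rabs (fst p) <= M /\ Rabs (snd p) <= M.

Definition vtx (vs : list pt) (i : nat) : pt :=
  nth (Nat.modulo i (length vs)) vs (0, 0).
Definition pedge (vs : list pt) (i : nat) : pt -> Prop :=
  seg (vtx vs i) (vtx vs (S i)).

Definition simple_polygon (vs : list pt) : Prop :=
  (3 <= length vs)%nat /\ NoDup vs /\
  forall i j, (i < length vs)%nat -> (j < length vs)%nat -> i <> j ->
    (j = Nat.modulo (S i) (length vs) ->
       forall p, (pedge vs i p /\ pedge vs j p) <-> p = vtx vs j) /\
    (j <> Nat.modulo (S i) (length vs) -> i <> Nat.modulo (S j) (length vs) ->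
       forall p, ~ (pedge vs i p /\ pedge vs j p)).

Definition general_position (vs : list pt) : Prop :=
  forall i j k, (i < length vs)%nat -> (j < length vs)%nat -> (k < length vs)%nat ->
    i <> j -> j <> k -> i <> k ->
    (fst (vtx vs j) - fst (vtx vs i)) * (snd (vtx vs k) - snd (vtx vs i))
    - (snd (vtx vs j) - snd (vtx vs i)) * (fst (vtx vs k) - fst (vtx vs i)) <> 0.

(* omega is the closed bounded region bounded by the polygon vs: a closed,
   bounded set with nonempty interior whose topological boundary is exactly
   the polygonal curve (by the Jordan curve theorem this is exactly the
   curve together with its inside). *)
Definition polygon_region (vs : list pt) (omega : pt -> Prop) : Prop :=
  is_closed omega /\ is_bounded omega /\
  (forall p, boundary omega p <-> exists i, (i < length vs)%nat /\ pedge vs i p) /\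
  (exists p, interior omega p).

Definition obstacle (omega : pt -> Prop) : Prop :=
  exists vs, simple_polygon vs /\ general_position vs /\ polygon_region vs omega.

Definition rectilinear_poly (vs : list pt) : Prop :=
  forall i, (i < length vs)%nat ->
    fst (vtx vs i) = fst (vtx vs (S i)) \/ snd (vtx vs i) = snd (vtx vs (S i)).

Definition rectilinear_obstacle (omega : pt -> Prop) : Prop :=
  exists vs, simple_polygon vs /\ general_position vs /\
    polygon_region vs omega /\ rectilinear_poly vs.

(* rectilinear paths: start point a, then the list of subsequent points;
   consecutive points are horizontally or vertically aligned *)
Fixpoint axis_path (a : pt) (l : list pt) : Prop :=
  match l with
  | nil => True
  | b :: l' => (fst a = fst b \/ snd a = snd b) /\ axis_path b l'
  end.

Definition l1dist (a b : pt) : R := Rabs (fst a - fst b) + Rabs (snd a - snd b).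

Fixpoint path_len (a : pt) (l : list pt) : R :=
  match l with
  | nil => 0
  | b :: l' => l1dist a b + path_len b l'
  end.

Fixpoint on_path (a : pt) (l : list pt) (x : pt) : Prop :=
  match l with
  | nil => x = a
  | b :: l' => seg a b x \/ on_path b l' x
  end.

Definition rect_path (p q : pt) (l : list pt) : Prop :=
  axis_path p l /\ last l p = q.

Definition shortest_rect_path (p q : pt) (l : list pt) : Prop :=
  rect_path p q l /\ forall l', rect_path p q l' -> path_len p l <= path_len p l'.

Definition rect_convex (omega : pt -> Prop) : Prop :=
  rectilinear_obstacle omega /\
  forall p q, omega p -> omega q ->
    exists l, shortest_rect_path p q l /\ forall x, on_path p l x -> omega x.

(* The shortest rectilinear paths from p to q with at most one corner point
   are exactly the two "L-shaped" paths below (they coincide with the straight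
   segment pq when p and q are axis-aligned). *)
Definition Lpath1 (p q : pt) (x : pt) : Prop :=
  seg p (fst q, snd p) x \/ seg (fst q, snd p) q x.
Definition Lpath2 (p q : pt) (x : pt) : Prop :=
  seg p (fst p, snd q) x \/ seg (fst p, snd q) q x.

Definition meets (A B : pt -> Prop) : Prop := exists x, A x /\ B x.

Definition hits (S : list (pt * pt)) (P : pt -> Prop) : Prop :=
  exists s, In s S /\ meets (seg (fst s) (snd s)) P.

Definition inside (omega : pt -> Prop) (S : list (pt * pt)) : Prop :=
  forall s, In s S -> forall x, seg (fst s) (snd s) x -> omega x.

Definition skeleton (omega : pt -> Prop) (S : list (pt * pt)) : Prop :=
  inside omega S /\
  forall p q, ~ interior omega p -> ~ interior omega q ->
    meets (Lpath1 p q) (interior omega) -> meets (Lpath2 p q) (interior omega) ->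
    hits S (Lpath1 p q) /\ hits S (Lpath2 p q).

Definition minimum_skeleton (omega : pt -> Prop) (S : list (pt * pt)) : Prop :=
  skeleton omega S /\
  forall S', skeleton omega S' -> (length S <= length S')%nat.

(* maximum length visibility edge: nondegenerate segment in omega that cannot
   be extended at either end while staying in omega *)
Definition max_vis_edge (omega : pt -> Prop) (a b : pt) : Prop :=
  a <> b /\ (forall x, seg a b x -> omega x) /\
  forall e, 0 < e ->
    ~ (forall x, seg (fst a - e * (fst b - fst a), snd a - e * (snd b - snd a)) b x -> omega x) /\
    ~ (forall x, seg a (fst b + e * (fst b - fst a), snd b + e * (snd b - snd a)) x -> omega x).

(* Main.v *)
Require Import Defs.
From Stdlib Require Import Reals List.
From Stdlib Require Import Arith Lia Lra Psatz Classical.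
Require Import Defs.
Open Scope R_scope.

Lemma abs_le x b : Rabs x <= b -> -b <= x <= b.
Proof. unfold Rabs; destruct Rcase_abs; lra. Qed.
Lemma abs_lt x b : Rabs x < b -> -b < x < b.
Proof. unfold Rabs; destruct Rcase_abs; lra. Qed.

Definition Lp (a b : pt) (s : R) : pt :=
  (fst a + s*(fst b - fst a), snd a + s*(snd b - snd a)).

Lemma Lnear a b e : 0 < e -> exists d, 0 < d /\
  forall s t, Rabs (s - t) < d -> ball_in (Lp a b t) e (Lp a b s).
Proof.
  intros He.
  set (K := Rabs (fst b - fst a) + Rabs (snd b - snd a) + 1).
  pose proof (Rabs_pos (fst b - fst a)). pose proof (Rabs_pos (snd b - snd a)).
  assert (HK : 0 < K) by (unfold K; lra).
  exists (e / K). split. apply Rdiv_lt_0_compat; lra.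
  intros s t Hst. assert (HeK : e / K * K = e) by (field; lra).
  pose proof (Rabs_pos (s - t)).
  unfold ball_in, Lp; simpl. split.
  - replace (fst a + s * (fst b - fst a) - (fst a + t * (fst b - fst a)))
      with ((s - t) * (fst b - fst a)) by ring.
    rewrite Rabs_mult. assert (Rabs (fst b - fst a) <= K) by (unfold K; lra). nra.
  - replace (snd a + s * (snd b - snd a) - (snd a + t * (snd b - snd a)))
      with ((s - t) * (snd b - snd a)) by ring.
    rewrite Rabs_mult. assert (Rabs (snd b - snd a) <= K) by (unfold K; lra). nra.
Qed.

Lemma half (F : R -> Prop) :
  (forall t, (forall d, 0 < d -> exists s, Rabs (s - t) < d /\ F s) -> F t) ->
  (exists B, forall s, F s -> s <= B) ->
  (forall s, 0 <= s <= 1 -> F s) ->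
  exists t2, 1 <= t2 /\ (forall s, 0 <= s <= t2 -> F s) /\
    forall e, 0 < e -> ~ (forall s, 0 <= s <= t2 + e -> F s).
Proof.
  intros Hcl [B HB] H01.
  set (U := fun t => 1 <= t /\ forall s, 0 <= s <= t -> F s).
  assert (Hb : bound U).
  { exists B. intros t [Ht1 Ht]. apply HB, Ht; lra. }
  assert (Hne : exists x, U x) by (exists 1; split; [lra | exact H01]).
  destruct (completeness U Hb Hne) as [t2 [Hub Hlub]].
  assert (H1 : 1 <= t2) by (apply Hub; split; [lra | exact H01]).
  assert (Hlt : forall s, 0 <= s < t2 -> F s).
  { intros s Hs. destruct (classic (exists u, U u /\ s < u)) as [[u [[_ Hu] Hsu]] | Hn].
    - apply Hu; lra.
    - exfalso. assert (Hs' : is_upper_bound U s).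
      { intros u Hu. destruct (Rle_or_lt u s); auto. exfalso; apply Hn; eauto. }
      specialize (Hlub s Hs'); lra. }
  assert (Ht2 : F t2).
  { apply Hcl. intros d Hd. destruct (Rle_lt_dec d 1).
    - exists (t2 - d/2). split. apply Rabs_def1; lra. apply Hlt; lra.
    - exists (t2 - 1/2). split. apply Rabs_def1; lra. apply Hlt; lra. }
  exists t2. split; [lra|]. split.
  - intros s Hs. destruct (Rle_lt_or_eq_dec s t2) as [Hl|He]; [lra| apply Hlt; lra| subst; auto].
  - intros e He Hall. assert (Hu : U (t2 + e)) by (split; [lra | exact Hall]).
    specialize (Hub _ Hu). lra.
Qed.

Lemma full (F : R -> Prop) :
  (forall t, (forall d, 0 < d -> exists s, Rabs (s - t) < d /\ F s) -> F t) ->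
  (exists B, forall s, F s -> Rabs s <= B) ->
  (forall s, 0 <= s <= 1 -> F s) ->
  exists t1 t2, t1 <= 0 /\ 1 <= t2 /\ (forall s, t1 <= s <= t2 -> F s) /\
    (forall e, 0 < e -> ~ (forall s, t1 - e <= s <= t2 -> F s)) /\
    (forall e, 0 < e -> ~ (forall s, t1 <= s <= t2 + e -> F s)).
Proof.
  intros Hcl [B HB] H01.
  destruct (half F Hcl) as [t2 [H2 [HF2 HN2]]].
  { exists B. intros s Hs. apply HB in Hs. apply abs_le in Hs. lra. }
  { exact H01. }
  destruct (half (fun t => F (1 - t))) as [t1' [H1 [HF1 HN1]]].
  { intros t Ht. apply Hcl. intros d Hd. destruct (Ht d Hd) as [s [Hs HFs]].
    exists (1 - s). split; auto. replace (1 - s - (1 - t)) with (- (s - t)) by ring.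
    rewrite Rabs_Ropp; auto. }
  { exists (B + 1). intros s Hs. apply HB in Hs. apply abs_le in Hs. lra. }
  { intros s Hs. apply H01. lra. }
  exists (1 - t1'), t2. split; [lra|]. split; [lra|]. split; [|split].
  - intros s Hs. destruct (Rle_or_lt s 1).
    + replace s with (1 - (1 - s)) by ring. apply HF1. lra.
    + apply HF2. lra.
  - intros e He Hall. apply (HN1 e He). intros s Hs. apply Hall. lra.
  - intros e He Hall. apply (HN2 e He). intros s Hs. apply Hall. lra.
Qed.

Lemma seg_Lp_back a b P Q t1 t2 s :
  t1 <= s <= t2 -> t1 < t2 ->
  fst P = fst a + t1 * (fst b - fst a) -> snd P = snd a + t1 * (snd b - snd a) ->
  fst Q = fst a + t2 * (fst b - fst a) -> snd Q = snd a + t2 * (snd b - snd a) ->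
  seg P Q (Lp a b s).
Proof.
  intros Hs Ht HP1 HP2 HQ1 HQ2.
  exists ((s - t1) / (t2 - t1)).
  assert (Hu : (s - t1) / (t2 - t1) * (t2 - t1) = s - t1) by (field; lra).
  split; [split; nra|].
  unfold Lp; simpl. rewrite HP1, HP2, HQ1, HQ2. split; field; lra.
Qed.

Lemma seg_Lp_fwd a b P Q t1 t2 x :
  seg P Q x -> t1 <= t2 ->
  fst P = fst a + t1 * (fst b - fst a) -> snd P = snd a + t1 * (snd b - snd a) ->
  fst Q = fst a + t2 * (fst b - fst a) -> snd Q = snd a + t2 * (snd b - snd a) ->
  exists s, t1 <= s <= t2 /\ x = Lp a b s.
Proof.
  intros [u [Hu [H1 H2]]] Ht HP1 HP2 HQ1 HQ2.
  exists (t1 + u * (t2 - t1)). split; [split; nra|].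
  destruct x as [x1 x2]; unfold Lp; simpl in *. rewrite H1, H2, HP1, HP2, HQ1, HQ2.
  f_equal; ring.
Qed.

Lemma abs_bound a1 d1 M s : d1 <> 0 -> Rabs (a1 + s * d1) <= M ->
  Rabs s <= (M + Rabs a1) / Rabs d1.
Proof.
  intros Hd H.
  pose proof (Rabs_triang (a1 + s * d1) (- a1)) as T.
  rewrite Rabs_Ropp in T. replace (a1 + s * d1 + - a1) with (s * d1) in T by ring.
  rewrite Rabs_mult in T.
  assert (Hp : 0 < Rabs d1) by (apply Rabs_pos_lt; auto).
  apply (Rmult_le_reg_r (Rabs d1)); auto. unfold Rdiv.
  rewrite Rmult_assoc, Rinv_l; [lra | apply Rgt_not_eq; auto].
Qed.

Lemma extend (omega : pt -> Prop) : is_closed omega -> is_bounded omega ->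
  forall a b, a <> b -> (forall x, seg a b x -> omega x) ->
  exists c d, max_vis_edge omega c d /\ forall x, seg a b x -> seg c d x.
Proof.
  intros Hcl [M HM] a b Hab Hin.
  set (F := fun s => omega (Lp a b s)).
  destruct (full F) as [t1 [t2 [Ht1 [Ht2 [HF [HNl HNr]]]]]].
  - intros t Ht. apply Hcl. intros e He. destruct (Lnear a b e He) as [d [Hd Hn]].
    destruct (Ht d Hd) as [s [Hs HFs]]. exists (Lp a b s). split; auto.
  - destruct (Req_dec (fst b - fst a) 0) as [E1|E1].
    + destruct (Req_dec (snd b - snd a) 0) as [E2|E2].
      * exfalso. apply Hab. destruct a, b; simpl in *; f_equal; lra.
      * exists ((M + Rabs (snd a)) / Rabs (snd b - snd a)). intros s Hs.
        apply abs_bound; auto. apply (HM _ Hs).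
    + exists ((M + Rabs (fst a)) / Rabs (fst b - fst a)). intros s Hs.
      apply abs_bound; auto. apply (HM _ Hs).
  - intros s Hs. apply Hin. exists s. unfold Lp; simpl. split; [lra | split; reflexivity].
  - exists (Lp a b t1), (Lp a b t2). split; [split; [|split]|].
    + intro Heq. apply Hab.
      assert (E1 : fst (Lp a b t1) = fst (Lp a b t2)) by (rewrite Heq; reflexivity).
      assert (E2 : snd (Lp a b t1) = snd (Lp a b t2)) by (rewrite Heq; reflexivity).
      unfold Lp in E1, E2; simpl in E1, E2.
      assert (Z1 : (t2 - t1) * (fst b - fst a) = 0) by lra.
      assert (Z2 : (t2 - t1) * (snd b - snd a) = 0) by lra.
      destruct (Rmult_integral _ _ Z1); [lra|].
      destruct (Rmult_integral _ _ Z2); [lra|].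
      destruct a, b; simpl in *; f_equal; lra.
    + intros x Hx. destruct (seg_Lp_fwd a b _ _ t1 t2 x Hx) as [s [Hs ->]];
        try (unfold Lp; simpl; ring); try lra.
      apply HF; auto.
    + intros e He; split; intro Hall.
      * apply (HNl (e * (t2 - t1))); [nra|]. intros s Hs. apply Hall.
        apply seg_Lp_back with (t1 := t1 - e * (t2 - t1)) (t2 := t2);
          try (unfold Lp; simpl; ring); try lra; nra.
      * apply (HNr (e * (t2 - t1))); [nra|]. intros s Hs. apply Hall.
        apply seg_Lp_back with (t1 := t1) (t2 := t2 + e * (t2 - t1));
          try (unfold Lp; simpl; ring); try lra; nra.
    + intros x Hx. destruct (seg_Lp_fwd a b a b 0 1 x Hx) as [s [Hs ->]];
        try (simpl; ring); try lra.
      apply seg_Lp_back with (t1 := t1) (t2 := t2); try (unfold Lp; simpl; ring); lra.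
Qed.

Lemma int_in (A : pt -> Prop) p : interior A p -> A p.
Proof.
  intros [r [Hr Hb]]. apply Hb. unfold ball_in. rewrite !Rminus_diag, Rabs_R0. lra.
Qed.

Lemma nonint_pt (A : pt -> Prop) p : ~ interior A p ->
  forall e, 0 < e -> exists q, ball_in p e q /\ ~ A q.
Proof.
  intros Hn e He. apply NNPP. intro Hno. apply Hn. exists e. split; auto.
  intros q Hq. apply NNPP. intro Hq'. apply Hno. eauto.
Qed.

Lemma ball_trans p q r e1 e2 : ball_in p e1 q -> ball_in q e2 r -> ball_in p (e1 + e2) r.
Proof.
  unfold ball_in. intros [A1 A2] [B1 B2].
  pose proof (Rabs_triang (fst r - fst q) (fst q - fst p)).
  pose proof (Rabs_triang (snd r - snd q) (snd q - snd p)).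
  replace (fst r - fst q + (fst q - fst p)) with (fst r - fst p) in * by ring.
  replace (snd r - snd q + (snd q - snd p)) with (snd r - snd p) in * by ring.
  split; lra.
Qed.

Lemma ball_weak p q e1 e2 : ball_in p e1 q -> e1 <= e2 -> ball_in p e2 q.
Proof. unfold ball_in; intros [A B] H; split; lra. Qed.

Lemma cross (omega : pt -> Prop) p x : ~ interior omega p -> interior omega x ->
  exists y, seg p x y /\ boundary omega y.
Proof.
  intros Hp Hx.
  set (V := fun t => 0 <= t <= 1 /\ ~ interior omega (Lp p x t)).
  assert (HL0 : Lp p x 0 = p) by (destruct p; unfold Lp; simpl; f_equal; ring).
  assert (HL1 : Lp p x 1 = x) by (destruct p, x; unfold Lp; simpl; f_equal; ring).
  assert (Hb : bound V) by (exists 1; intros t [Ht _]; lra).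
  assert (Hne : exists t, V t) by (exists 0; split; [lra | rewrite HL0; auto]).
  destruct (completeness V Hb Hne) as [ts [Hub Hlub]].
  assert (Hts0 : 0 <= ts) by (apply Hub; split; [lra | rewrite HL0; auto]).
  assert (Hts1 : ts <= 1) by (apply Hlub; intros t [Ht _]; lra).
  exists (Lp p x ts). split.
  { exists ts. unfold Lp; simpl. split; [lra | split; reflexivity]. }
  intros e He. destruct (Lnear p x (e/2)) as [d [Hd Hn]]; [lra|].
  split.
  - destruct (Rlt_or_le ts 1) as [Hlt|Hge].
    + assert (Hex : exists t, ts < t <= 1 /\ Rabs (t - ts) < d).
      { destruct (Rle_lt_dec (ts + d/2) 1).
        - exists (ts + d/2). split; [lra|]. apply Rabs_def1; lra.
        - exists 1. split; [lra|]. apply Rabs_def1; lra. }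
      destruct Hex as [t [Ht Htd]].
      assert (Hi : interior omega (Lp p x t)).
      { apply NNPP. intro Hni. assert (V t) by (split; [lra|auto]).
        specialize (Hub _ H). lra. }
      exists (Lp p x t). split; [|apply int_in; auto].
      apply ball_weak with (e/2); [apply Hn; auto | lra].
    + assert (ts = 1) by lra. subst ts. rewrite HL1. exists x. split.
      * unfold ball_in. rewrite !Rminus_diag, Rabs_R0. lra.
      * apply int_in; auto.
  - assert (Hex : exists t, V t /\ ts - d < t).
    { apply NNPP. intro Hno.
      assert (is_upper_bound V (ts - d)).
      { intros t Ht. destruct (Rle_or_lt t (ts - d)); auto. exfalso; apply Hno; eauto. }
      specialize (Hlub _ H). lra. }
    destruct Hex as [t [[Ht Hni] Htd]].
    assert (t <= ts) by (apply Hub; split; auto).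
    destruct (nonint_pt omega _ Hni (e/2)) as [q [Hq Hnq]]; [lra|].
    exists q. split; auto.
    replace e with (e/2 + e/2) by field.
    apply ball_trans with (Lp p x t); auto. apply Hn. apply Rabs_def1; lra.
Qed.

Lemma subseg p m x y : seg p m x -> seg p x y -> seg p m y.
Proof.
  intros [u [Hu [X1 X2]]] [v [Hv [Y1 Y2]]].
  exists (v * u). split; [split; nra|]. rewrite Y1, Y2, X1, X2. split; ring.
Qed.

Lemma seg_end p m : seg p m m.
Proof. exists 1. split; [lra| split; ring]. Qed.

Lemma Lhit (omega : pt -> Prop) p q m : ~ interior omega p ->
  meets (fun z => seg p m z \/ seg m q z) (interior omega) ->
  exists y, (seg p m y \/ seg m q y) /\ boundary omega y.
Proof.
  intros Hp [x [[Hx|Hx] Hi]].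
  - destruct (cross omega p x Hp Hi) as [y [Hy Hb]]. exists y. split; auto.
    left. eapply subseg; eauto.
  - destruct (classic (interior omega m)) as [Hm|Hm].
    + destruct (cross omega p m Hp Hm) as [y [Hy Hb]]. eauto.
    + destruct (cross omega m x Hm Hi) as [y [Hy Hb]]. exists y. split; auto.
      right. eapply subseg; eauto.
Qed.

Lemma vtx_neq vs i : (3 <= length vs)%nat -> NoDup vs -> (i < length vs)%nat ->
  vtx vs i <> vtx vs (S i).
Proof.
  intros H3 Hnd Hi Heq. unfold vtx in Heq.
  rewrite (Nat.mod_small i) in Heq by lia.
  destruct (Nat.lt_ge_cases (S i) (length vs)) as [Hs|Hs].
  - rewrite (Nat.mod_small (S i)) in Heq by lia.
    apply (proj1 (NoDup_nth vs (0,0)) Hnd) in Heq; lia.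
  - assert (S i = length vs) by lia. rewrite H, Nat.Div0.mod_same in Heq.
    apply (proj1 (NoDup_nth vs (0,0)) Hnd) in Heq; lia.
Qed.

Lemma bd_in (omega : pt -> Prop) p : is_closed omega -> boundary omega p -> omega p.
Proof. intros Hcl Hb. apply Hcl. intros e He. apply (proj1 (Hb e He)). Qed.

Lemma least (P : nat -> Prop) : (exists n, P n) -> exists n, P n /\ forall m, P m -> (n <= m)%nat.
Proof.
  intros [n Hn]. revert Hn. induction n as [n IH] using lt_wf_ind. intro Hn.
  destruct (classic (exists m, P m /\ (m < n)%nat)) as [[m [Hm Hlt]]|Hno].
  - exact (IH m Hlt Hm).
  - exists n. split; auto. intros m Hm. destruct (le_lt_dec n m); auto.
    exfalso; apply Hno; eauto.
Qed.


Lemma pt_seg (omega : pt -> Prop) (vs : list pt) (Hsp : simple_polygon vs) (Hreg : polygon_region vs omega) a : omega a -> exists c d, c <> d /\ (forall x, seg c d x -> omega x) /\ seg c d a.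
Proof.
  pose proof Hreg as [Hcl [Hbd [Hbe _]]]. pose proof Hsp as [H3 [Hnd _]].
  intros Ha. destruct (classic (interior omega a)) as [[r [Hr Hb]]|Hn].
  - exists a, (fst a + r/2, snd a). split; [|split].
    + intro H. assert (fst a = fst (fst a + r/2, snd a)) by (rewrite <- H; reflexivity).
      simpl in *; lra.
    + intros x [t [Ht [X1 X2]]]. apply Hb. unfold ball_in. simpl in *.
      rewrite X1, X2. split; apply Rabs_def1; nra.
    + exists 0. split; [lra| split; ring].
  - assert (Hb : boundary omega a).
    { intros e He. split.
      - exists a. split; auto. unfold ball_in. rewrite !Rminus_diag, Rabs_R0. lra.
      - apply nonint_pt; auto. }
    apply Hbe in Hb. destruct Hb as [i [Hi Hpe]].
    exists (vtx vs i), (vtx vs (S i)). split; [|split].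
    + apply vtx_neq; auto.
    + intros x Hx. apply bd_in; auto. apply Hbe. exists i. split; auto.
    + exact Hpe.
Qed.

Lemma elem (omega : pt -> Prop) (vs : list pt) (Hsp : simple_polygon vs) (Hreg : polygon_region vs omega) a b : (forall x, seg a b x -> omega x) ->
  exists c d, max_vis_edge omega c d /\ forall x, seg a b x -> seg c d x.
Proof.
  pose proof Hreg as [Hcl [Hbd _]].
  intros Hin. destruct (classic (a = b)) as [<-|Hab].
  - destruct (pt_seg omega vs Hsp Hreg a) as [c0 [d0 [Hn [Hi Ha]]]].
    { apply Hin. exists 0. split; [lra| split; ring]. }
    destruct (extend omega Hcl Hbd c0 d0 Hn Hi) as [c [d [Hm Hc]]].
    exists c, d. split; auto. intros x [t [Ht [X1 X2]]].
    replace x with a; [auto|]. destruct x, a; simpl in *; f_equal; lra.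
  - apply extend; auto.
Qed.

Lemma remap (omega : pt -> Prop) (vs : list pt) (Hsp : simple_polygon vs) (Hreg : polygon_region vs omega) S : inside omega S -> exists S', length S' = length S /\
  (forall s, In s S' -> max_vis_edge omega (fst s) (snd s)) /\
  forall s, In s S -> exists s', In s' S' /\
     forall x, seg (fst s) (snd s) x -> seg (fst s') (snd s') x.
Proof.
  induction S as [|s S IH]; intros Hin.
  - exists nil. simpl. split; auto. split; intros; contradiction.
  - destruct IH as [S' [Hl [Hm Hc]]].
    { intros s' Hs'. apply Hin. right; auto. }
    destruct (elem omega vs Hsp Hreg (fst s) (snd s)) as [c [d [Hcd Hcv]]].
    { apply Hin. left; auto. }
    exists ((c, d) :: S'). simpl. split; [lia|]. split.
    + intros s0 [<-|Hs0]; auto.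
    + intros s0 [<-|Hs0].
      * exists (c, d). split; auto.
      * destruct (Hc s0 Hs0) as [s' [Hs' Hx]]. eauto.
Qed.

Definition S0 (vs : list pt) := map (fun i => (vtx vs i, vtx vs (S i))) (seq 0 (length vs)).

Lemma S0_skel (omega : pt -> Prop) (vs : list pt) (Hsp : simple_polygon vs) (Hreg : polygon_region vs omega) : skeleton omega (S0 vs).
Proof.
  destruct Hreg as [Hcl [Hbd [Hbe _]]]. split.
  - intros s Hs x Hx. apply in_map_iff in Hs. destruct Hs as [i [<- Hi]].
    apply in_seq in Hi. apply bd_in; auto. apply Hbe. exists i. split; [lia|exact Hx].
  - intros p q Hp Hq H1 H2.
    assert (G : forall m, meets (fun z => seg p m z \/ seg m q z) (interior omega) ->
       hits (S0 vs) (fun z => seg p m z \/ seg m q z)).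
    { intros m Hm. destruct (Lhit omega p q m Hp Hm) as [y [Hy Hb]].
      apply Hbe in Hb. destruct Hb as [i [Hi Hpe]].
      exists (vtx vs i, vtx vs (S i)). split.
      - apply in_map_iff. exists i. split; auto. apply in_seq. lia.
      - exists y. split; auto. }
    split; [apply (G (fst q, snd p)) | apply (G (fst p, snd q))]; auto.
Qed.


Theorem lemma1' (omega : pt -> Prop) :
  rect_convex omega ->
  exists S : list (pt * pt),
    minimum_skeleton omega S /\
    forall s, In s S -> max_vis_edge omega (fst s) (snd s).
Proof.
  intros [[vs [Hsp [_ [Hreg _]]]] _].
  destruct (least (fun k => exists S, skeleton omega S /\ length S = k)) as [n [[S [Hs Hl]] Hmin]].
  { exists (length (S0 vs)). exists (S0 vs). split; auto. apply S0_skel; auto. }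
  destruct (remap omega vs Hsp Hreg S (proj1 Hs)) as [S' [Hl' [Hm Hc]]].
  exists S'. split; [split|auto].
  - split.
    + intros s Hs' x Hx. apply (Hm s Hs'). exact Hx.
    + intros p q Hp Hq H1 H2. destruct (proj2 Hs p q Hp Hq H1 H2) as [[s [Hin [y [Hy Hy']]]] [s2 [Hin2 [y2 [Hy2 Hy2']]]]].
      split.
      * destruct (Hc s Hin) as [s' [Hs'' Hx]]. exists s'. split; auto. exists y; auto.
      * destruct (Hc s2 Hin2) as [s' [Hs'' Hx]]. exists s'. split; auto. exists y2; auto.
  - intros S2 HS2. rewrite Hl', Hl. apply Hmin. eauto.
Qed.

Theorem lemma1 (omega : pt -> Prop) :
  rect_convex omega ->
  exists S : list (pt * pt),
    minimum_skeleton omega S /\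
    forall s, In s S -> max_vis_edge omega (fst s) (snd s).
Proof. exact (lemma1' omega). Qed.
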